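(* For every $n\in\mathbb N$, $C_{L_n}\le C_{L_{n+1}}$.
   Context: $L_n$ is the path graph with vertices $\{1,\dots,n\}$ and edges $\{j,j+1\}$, with distance $|i-j|$. A measure on $L_n$ is a weight function $\mu:\{1,\dots,n\}\to(0,\infty)$, $\mu(A)=\sum_{v\in A}\mu(v)$. Closed balls: $B(x,r)=\{y:|x-y|\le r\}$. $C_\mu=\sup\{\mu(B(x,2k+1))/\mu(B(x,k)):1\le x\le n,\ k\ge0\}$ and $C_{L_n}=\inf_\mu C_\mu$. *)

(* Defs.v *)
From HB Require Import structures.
From mathcomp Require Import all_boot all_order all_algebra.
From mathcomp Require Import classical_sets reals.
Set Implicit Arguments. Unset Strict Implicit. Unset Printing Implicit Defensive.
Import Order.TTheory GRing.Theory Num.Theory.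
Local Open Scope ring_scope.
Local Open Scope classical_set_scope.

(* distance |i - j| on the path graph L_n (vertices 1..n) *)
Definition pdist (i j : nat) : nat := ((i - j) + (j - i))%N.

Definition ball_mass {R : realType} (n : nat) (mu : nat -> R) (x r : nat) : R :=
  \sum_(1 <= y < n.+1 | (pdist x y <= r)%N) mu y.

(* a measure on L_n: positive weights on the vertices 1..n
   (values outside 1..n are irrelevant) *)
Definition is_measure_on {R : realType} (n : nat) (mu : nat -> R) : Prop :=
  forall v : nat, (1 <= v <= n)%N -> 0 < mu v.

Definition C_mu {R : realType} (n : nat) (mu : nat -> R) : R :=
  sup [set t | exists x k : nat, (1 <= x <= n)%N /\
       t = ball_mass n mu x (2 * k + 1) / ball_mass n mu x k].

Definition C_L {R : realType} (n : nat) : R :=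
  inf [set t | exists mu : nat -> R, is_measure_on n mu /\ t = C_mu n mu].

(* Main.v *)
Require Import Defs.
From mathcomp Require Import all_boot all_order all_algebra.
From mathcomp Require Import classical_sets reals.
From mathcomp Require Import boolp zify ring lra.
Import Order.TTheory GRing.Theory Num.Theory.
Set Implicit Arguments.
Local Open Scope ring_scope.

Section Sums.
Context {R : realType}.
Implicit Types f : nat -> R.

Definition S f (a b : nat) : R := \sum_(a <= i < b) f i.

Lemma S_split f a c b : (a <= c)%N -> (c <= b)%N -> S f a b = S f a c + S f c b.
Proof. by move=> ac cb; rewrite /S (big_cat_nat ac cb). Qed.
Arguments S_split f {a c b}.

Lemma S_recr f a b : (a <= b)%N -> S f a b.+1 = S f a b + f b.
Proof. by move=> ab; rewrite /S big_nat_recr. Qed.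

Lemma S_recl f a b : (a < b)%N -> S f a b = f a + S f a.+1 b.
Proof. by move=> ab; rewrite /S big_ltn. Qed.
Arguments S_recl f {a b}.

Lemma S_empty f a b : (b <= a)%N -> S f a b = 0.
Proof. by move=> ba; rewrite /S big_geq. Qed.

Lemma S_ge0 f a b : (forall i, (a <= i < b)%N -> 0 <= f i) -> 0 <= S f a b.
Proof.
move=> H; rewrite /S big_nat_cond; apply: sumr_ge0 => i /andP [Hi _]; exact: H.
Qed.

Lemma S_le f g a b : (forall i, (a <= i < b)%N -> f i <= g i) -> S f a b <= S g a b.
Proof.
move=> H; rewrite /S big_nat_cond [X in _ <= X]big_nat_cond.
apply: ler_sum => i /andP [Hi _]; exact: H.
Qed.

Lemma S_const f a b c : (forall i, (a <= i < b)%N -> f i = c) -> S f a b = c *+ (b - a).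
Proof.
move=> H; rewrite /S (eq_big_nat _ _ (F2 := fun _ => c)) //; exact: sumr_const_nat.
Qed.

Lemma S_mono f a b a' b' : (a' <= a)%N -> (b <= b')%N ->
  (forall i, (a' <= i < b')%N -> 0 <= f i) -> S f a b <= S f a' b'.
Proof.
move=> a'a bb' H.
case: (leqP a b) => ab; last first.
  by rewrite S_empty ?(ltnW ab) //; apply: S_ge0.
rewrite (S_split f a'a (leq_trans ab bb')) (S_split f ab bb').
have h1 : 0 <= S f a' a by apply: S_ge0 => i /andP[? ?]; apply: H; lia.
have h2 : 0 <= S f b b' by apply: S_ge0 => i /andP[? ?]; apply: H; lia.
lra.
Qed.

Lemma S_single f a b y : (a <= y < b)%N ->
  (forall i, (a <= i < b)%N -> 0 <= f i) -> f y <= S f a b.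
Proof.
move=> /andP [ay yb] H.
rewrite (S_split f ay (ltnW yb)) (S_recl f yb).
have h1 : 0 <= S f a y by apply: S_ge0 => i /andP[? ?]; apply: H; lia.
have h2 : 0 <= S f y.+1 b by apply: S_ge0 => i /andP[? ?]; apply: H; lia.
lra.
Qed.

Definition lo (x r : nat) := maxn 1 (x - r).
Definition hi (n x r : nat) := minn n.+1 (x + r).+1.

Lemma ball_massE n f x r : (1 <= x <= n.+1)%N ->
  ball_mass n f x r = S f (lo x r) (hi n x r).
Proof.
move=> Hx; rewrite /ball_mass big_mkcond /=.
have h1 : (1 <= lo x r)%N by rewrite /lo; lia.
have h2 : (lo x r <= hi n x r)%N by rewrite /lo /hi; lia.
have h3 : (hi n x r <= n.+1)%N by rewrite /hi; lia.
rewrite (big_cat_nat h1 (leq_trans h2 h3)) (big_cat_nat h2 h3) /=.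
rewrite [X in X + _ = _](eq_big_nat _ _ (F2 := fun _ => 0)); last first.
  move=> i Hi; rewrite ifF //; apply/negbTE; rewrite /pdist /lo in Hi *; lia.
rewrite [X in _ + (_ + X) = _](eq_big_nat _ _ (F2 := fun _ => 0)); last first.
  move=> i Hi; rewrite ifF //; apply/negbTE; rewrite /pdist /hi in Hi *; lia.
rewrite !big1_eq add0r addr0 /S; apply: eq_big_nat => i Hi.
rewrite ifT //; rewrite /pdist /lo /hi in Hi *; lia.
Qed.

End Sums.

Lemma S1 {R : realType} (f : nat -> R) a : S f a a.+1 = f a.
Proof. by rewrite S_recr // S_empty // add0r. Qed.
Lemma S2 {R : realType} (f : nat -> R) a : S f a a.+2 = f a + f a.+1.
Proof. by rewrite S_recr // S1. Qed.
Lemma S3 {R : realType} (f : nat -> R) a : S f a a.+3 = f a + f a.+1 + f a.+2.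
Proof. rewrite S_recr; last by lia. by rewrite S2. Qed.

Section Key.
Variable R : realType.
Variables (n : nat) (f : nat -> R) (C : R).
Hypothesis Hn : (0 < n)%N.
Hypothesis Hpos : forall v, (1 <= v <= n.+1)%N -> 0 < f v.
Hypothesis H : forall x k, (1 <= x <= n.+1)%N ->
  S f (lo x (2 * k + 1)) (hi n.+1 x (2 * k + 1)) <= C * S f (lo x k) (hi n.+1 x k).
Hypothesis HC3 : C <= 3.

Lemma Hge0 a b : (1 <= a)%N -> (b <= n.+2)%N -> 0 <= S f a b.
Proof. by move=> *; apply: S_ge0 => i Hi; apply/ltW/Hpos; lia. Qed.

Lemma C2 : 2 <= C.
Proof.
have h1 := H n.+1 0 ltac:(lia).
have h2 := H n 0 ltac:(lia).
have e1 : lo n.+1 (2*0+1) = n by rewrite /lo; lia.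
have e2 : hi n.+1 n.+1 (2*0+1) = n.+2 by rewrite /hi; lia.
have e3 : lo n.+1 0 = n.+1 by rewrite /lo; lia.
have e4 : hi n.+1 n.+1 0 = n.+2 by rewrite /hi; lia.
rewrite e1 e2 e3 e4 S2 S1 in h1.
have e5 : hi n.+1 n (2*0+1) = n.+2 by rewrite /hi; lia.
have e6 : lo n 0 = n by rewrite /lo; lia.
have e7 : hi n.+1 n 0 = n.+1 by rewrite /hi; lia.
rewrite e5 e6 e7 S1 in h2.
have h3 : S f n n.+2 <= S f (lo n (2*0+1)) n.+2.
  by apply: S_mono => // [|i Hi]; [rewrite /lo; lia | apply/ltW/Hpos; rewrite /lo in Hi; lia].
rewrite S2 in h3.
have p1 := Hpos n ltac:(lia).
have p2 := Hpos n.+1 ltac:(lia).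
case: (lerP (f n) (f n.+1)) => hh; nra.
Qed.

Lemma concave y : (2 <= y <= n)%N -> f y.-1 + f y.+1 <= 2 * f y.
Proof.
move=> Hy.
have [z Ez] : exists z, y = z.+1 by exists y.-1; lia.
subst y => /=.
have h := H z.+1 0 ltac:(lia).
have e1 : lo z.+1 (2*0+1) = z by rewrite /lo; lia.
have e2 : hi n.+1 z.+1 (2*0+1) = z.+3 by rewrite /hi; lia.
have e3 : lo z.+1 0 = z.+1 by rewrite /lo; lia.
have e4 : hi n.+1 z.+1 0 = z.+2 by rewrite /hi; lia.
rewrite e1 e2 e3 e4 S3 S1 in h.
have hp := Hpos z.+1 ltac:(lia).
have hc3 := HC3.
have : 0 <= (3 - C) * f z.+1 by apply: mulr_ge0; lra.
lra.
Qed.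

Definition incr j := f j.+1 - f j.

Lemma mono i j : (1 <= i)%N -> (i <= j)%N -> (j <= n)%N -> incr j <= incr i.
Proof.
move=> Hi Hij Hj.
have [d Ed] : exists d, j = (i + d)%N by exists (j - i)%N; lia.
subst j; clear Hij; move: Hj; elim: d => [|d IH] Hd; first by rewrite addn0.
apply: le_trans (IH ltac:(lia)).
have := concave (i + d).+1 ltac:(lia).
rewrite /incr addnS /=; lra.
Qed.

Lemma tele a b : (a <= b)%N -> f b - f a = S incr a b.
Proof. by move=> ab; rewrite /S /incr telescope_sumr. Qed.

Lemma S_lbc (g : nat -> R) a b (t : R) : (forall j, (a <= j < b)%N -> t <= g j) -> t * (b - a)%:R <= S g a b.
Proof.
move=> Hg; rewrite mulr_natr -(@S_const _ (fun _ => t) a b t) //.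
exact: S_le.
Qed.

Lemma S_ubc (g : nat -> R) a b (t : R) : (forall j, (a <= j < b)%N -> g j <= t) -> S g a b <= t * (b - a)%:R.
Proof.
move=> Hg; rewrite mulr_natr -(@S_const _ (fun _ => t) a b t) //.
exact: S_le.
Qed.

Lemma case3 p q : (1 <= q)%N -> (q <= p)%N -> (p <= n)%N -> (p - q <= n.+1 - p)%N ->
  0 < incr p -> f p < f n.+1 -> S f q n.+1 <= C * S f p n.+1.
Proof.
move=> Hq1 Hqp Hpn Hlen hep hcp.
have c2 := C2.
have fp := Hpos p ltac:(lia).
have Sp0 : 0 <= S f p n.+1 by apply: Hge0; lia.
set ep := incr p in hep *.
set c := f n.+1 in hcp *.
rewrite (S_split f q p n.+1); [|lia|lia].
have hlow : S f q p <= f p * (p - q)%:R.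
  apply: S_ubc => y Hy.
  have : ep * (p - y)%:R <= f p - f y.
    rewrite tele; last by lia.
    apply: S_lbc => j Hj; apply: mono; lia.
  have : 0 <= ep * (p - y)%:R by apply: mulr_ge0; [lra|apply: ler0n].
  lra.
have hup : f p * (n.+1 - p)%:R <= S f p n.+1.
  apply: S_lbc => z Hz.
  case: (eqVneq z p) => [->|hzp]; first lra.
  case: (lerP 0 (incr z.-1)) => hez.
    have : incr z.-1 * (z - p)%:R <= f z - f p.
      rewrite tele; last by lia.
      apply: S_lbc => j Hj; apply: mono; lia.
    have : 0 <= incr z.-1 * (z - p)%:R by apply: mulr_ge0; [lra|apply: ler0n].
    lra.
  have : c - f z <= incr z.-1 * (n.+1 - z)%:R.
    rewrite /c tele; last by lia.
    apply: S_ubc => j Hj; apply: mono; lia.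
  have : incr z.-1 * (n.+1 - z)%:R <= 0.
    by rewrite -oppr_ge0 -mulNr; apply: mulr_ge0; [lra|apply: ler0n].
  lra.
have hpq : ((p - q)%:R : R) <= (n.+1 - p)%:R by rewrite ler_nat.
have : f p * (p - q)%:R <= f p * (n.+1 - p)%:R by apply: ler_wpM2l; lra.
have : 0 <= (C - 2) * S f p n.+1 by apply: mulr_ge0; lra.
lra.
Qed.

Lemma key x k : (1 <= x <= n)%N ->
  S f (lo x (2 * k + 1)) (hi n x (2 * k + 1)) <= C * S f (lo x k) (hi n x k).
Proof.
move=> Hx.
have c2 := C2.
case: (leqP (x + k) n) => Hxk.
  have -> : hi n x k = hi n.+1 x k by rewrite /hi; lia.
  apply: le_trans (H x k ltac:(lia)).
  apply: S_mono => // [|i Hi]; first by rewrite /hi; lia.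
  by apply/ltW/Hpos; rewrite /lo /hi in Hi; lia.
have -> : hi n x k = n.+1 by rewrite /hi; lia.
have -> : hi n x (2 * k + 1) = n.+1 by rewrite /hi; lia.
case: (leqP (x - k) 1) => Hp.
  have -> : lo x k = 1%N by rewrite /lo; lia.
  have -> : lo x (2 * k + 1) = 1%N by rewrite /lo; lia.
  have := @Hge0 1 n.+1 ltac:(lia) ltac:(lia) => h0.
  have : 0 <= (C - 1) * S f 1 n.+1 by apply: mulr_ge0; lra.
  lra.
have [p [Ex Hp2]] : exists p, x = (p + k)%N /\ (2 <= p)%N by exists (x - k)%N; lia.
subst x.
have Hk : (1 <= k)%N by lia.
have Hpk : (p + k <= n)%N by lia.
have Hnk : (n.+1 <= p + k + k)%N by lia.
clear Hx Hxk Hp.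
have -> : lo (p + k) k = p by rewrite /lo; lia.
have h := H (p + k).+1 k ltac:(lia).
have e1 : lo (p + k).+1 k = p.+1 by rewrite /lo; lia.
have e2 : hi n.+1 (p + k).+1 k = n.+2 by rewrite /hi; lia.
have e3 : hi n.+1 (p + k).+1 (2 * k + 1) = n.+2 by rewrite /hi; lia.
rewrite e1 e2 e3 in h.
have hq : lo (p + k) (2 * k + 1) = maxn 1 (p - k.+1) by rewrite /lo; lia.
have hq' : lo (p + k).+1 (2 * k + 1) = maxn 1 (p - k) by rewrite /lo; lia.
rewrite hq' in h; rewrite hq; clear hq hq' e1 e2 e3.
set q := maxn 1 (p - k.+1).
have hq : q = maxn 1 (p - k.+1) by [].
clearbody q.
have c3a : (1 <= q)%N by rewrite hq; lia.
have c3b : (q <= p)%N by rewrite hq; lia.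
have c3c : (p <= n)%N by lia.
have c3d : (p - q <= n.+1 - p)%N by rewrite hq; lia.
set q' := maxn 1 (p - k) in h.
have hq' : q' = maxn 1 (p - k) by [].
clearbody q'.
have Sp := S_recr f p n.+1 ltac:(lia).
have Sp' := S_recl f p n.+2 ltac:(lia).
have Sq' := S_recr f q' n.+1 ltac:(lia).
rewrite Sq' in h.
set c := f n.+1 in Sp Sp' Sq' h *.
have fp := Hpos p ltac:(lia).
have c0 : 0 < c by apply: Hpos; lia.
have Sp0 : 0 <= S f p n.+1 by apply: Hge0; lia.
have [g [Hg Hgq]] : exists g, S f q n.+1 = g + S f q' n.+1 /\
   ((g = 0) \/ (g = f (p - k.+1) /\ (1 <= p - k.+1)%N)).
  case: (leqP (p - k.+1) 0) => hpk.
    exists 0; split; last by left.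
    have -> : q = q' by rewrite hq hq'; lia.
    by rewrite add0r.
  exists (f (p - k.+1)); split; last by right.
  have -> : q = (p - k.+1)%N by rewrite hq; lia.
  have -> : q' = (p - k.+1).+1 by rewrite hq'; lia.
  by rewrite S_recl //; lia.
set ep := incr p.
have hb : c - f p <= ep * (n.+1 - p)%:R.
  rewrite tele; last by lia.
  apply: S_ubc => j Hj; apply: mono; lia.
have hNK : ((k.+1)%:R : R) <= (n.+1 - p)%:R by rewrite ler_nat; lia.
have ha : (1 <= p - k.+1)%N -> f (p - k.+1) <= f p - ep * (k.+1)%:R.
  move=> hpk.
  have : ep * (p - (p - k.+1))%:R <= f p - f (p - k.+1).
    rewrite tele; last by lia.
    apply: S_lbc => j Hj; apply: mono; lia.
  have -> : (p - (p - k.+1))%N = k.+1 by lia.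
  lra.
have goalred : g + (C - 1) * c <= C * f p -> S f q n.+1 <= C * S f p n.+1.
  move=> hg. rewrite Hg.
  have Sp1 : S f p.+1 n.+2 = S f p n.+1 + c - f p by lra.
  rewrite Sp1 in h. lra.
case: (lerP ep 0) => hep.
  apply: goalred.
  have k0 : (0 : R) <= (k.+1)%:R by apply: ler0n.
  have hAK : ep * (n.+1 - p)%:R <= ep * (k.+1)%:R.
    have : 0 <= (- ep) * ((n.+1 - p)%:R - (k.+1)%:R) by apply: mulr_ge0; lra.
    lra.
  have hK0 : 0 <= - ep * (k.+1)%:R by apply: mulr_ge0; lra.
  case: Hgq => [-> | [-> hpk]].
    have : (C - 1) * c <= (C - 1) * f p by apply: ler_wpM2l; lra.
    lra.
  have := ha hpk.
  have : 0 <= (C - 2) * (f p - c) by apply: mulr_ge0; lra.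
  lra.
case: (lerP c (f p)) => hcp.
  apply: goalred.
  have hgle : g <= f p.
    case: Hgq => [-> | [-> hpk]]; first lra.
    have := ha hpk. have : 0 <= ep * (k.+1)%:R by apply: mulr_ge0; [lra|apply: ler0n]. lra.
  have : (C - 1) * c <= (C - 1) * f p by apply: ler_wpM2l; lra.
  lra.
exact: (@case3 p q c3a c3b c3c c3d hep hcp).
Qed.

End Key.

Local Open Scope classical_set_scope.

Section Main.
Context {R : realType}.
Implicit Types (mu nu : nat -> R).

Lemma sup_le_b (E : set R) b : (forall t, E t -> t <= b) -> 0 <= b -> sup E <= b.
Proof.
move=> Hb b0; case: (pselect (E !=set0)) => ne.
  by apply: ge_sup => // y Ey; exact: Hb.
have -> : E = set0.
  by apply/seteqP; split => y // Ey; exfalso; apply: ne; exists y.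
by rewrite sup0.
Qed.

Lemma sup_ge0 (E : set R) : (forall t, E t -> 0 <= t) -> 0 <= sup E.
Proof.
move=> H0; case: (pselect (has_sup E)) => hs; last by rewrite sup_out.
case: (hs) => [[t Et] ub].
apply: le_trans (H0 t Et) _; exact: ub_le_sup.
Qed.

Definition rset (N : nat) (mu : nat -> R) := [set t : R | exists x k : nat, (1 <= x <= N)%N /\
       t = ball_mass N mu x (2 * k + 1) / ball_mass N mu x k].

Lemma rsetE N mu : C_mu N mu = sup (rset N mu).
Proof. by []. Qed.

Lemma bm_pos N mu x r : is_measure_on N mu -> (1 <= x <= N)%N -> 0 < ball_mass N mu x r.
Proof.
move=> Hm Hx; rewrite ball_massE; last by lia.
apply: lt_le_trans (Hm x Hx) _; apply: S_single; first by rewrite /lo /hi; lia.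
move=> i Hi; apply/ltW/Hm; rewrite /lo /hi in Hi; lia.
Qed.

Lemma bm_le N mu x r : is_measure_on N mu -> (1 <= x <= N)%N ->
  ball_mass N mu x r <= S mu 1 N.+1.
Proof.
move=> Hm Hx; rewrite ball_massE; last by lia.
apply: S_mono; [rewrite /lo; lia | rewrite /hi; lia | ].
move=> i Hi; apply/ltW/Hm; lia.
Qed.

Lemma rset_ub N mu : is_measure_on N mu -> has_ubound (rset N mu).
Proof.
move=> Hm.
exists (S mu 1 N.+1 * S (fun y => (mu y)^-1) 1 N.+1) => t [x [k [Hx ->]]].
have D0 := @bm_pos N mu x k Hm Hx.
have N0 := @bm_pos N mu x (2 * k + 1) Hm Hx.
have NT := @bm_le N mu x (2 * k + 1) Hm Hx.
have mx := Hm x Hx.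
have Dmx : mu x <= ball_mass N mu x k.
  rewrite ball_massE; last by lia.
  apply: S_single; first by rewrite /lo /hi; lia.
  move=> i Hi; apply/ltW/Hm; rewrite /lo /hi in Hi; lia.
have Iv : (mu x)^-1 <= S (fun y => (mu y)^-1) 1 N.+1.
  apply: (@S_single _ (fun y => (mu y)^-1)); first by lia.
  move=> i Hi; rewrite invr_ge0; apply/ltW/Hm; lia.
rewrite ler_pdivrMr //.
have T0 : 0 <= S mu 1 N.+1 by apply: le_trans NT; apply: ltW.
have : 1 <= S (fun y => (mu y)^-1) 1 N.+1 * ball_mass N mu x k.
  rewrite -(mulVf (lt0r_neq0 mx)).
  apply: ler_pM => //; [rewrite invr_ge0; exact: ltW | exact: ltW].
move=> h1.
have : S mu 1 N.+1 * 1 <= S mu 1 N.+1 * (S (fun y => (mu y)^-1) 1 N.+1 * ball_mass N mu x k).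
  by apply: ler_wpM2l.
rewrite mulr1 mulrA; lra.
Qed.

Lemma ratio_le N mu x k : is_measure_on N mu -> (1 <= x <= N)%N ->
  ball_mass N mu x (2 * k + 1) / ball_mass N mu x k <= C_mu N mu.
Proof.
move=> Hm Hx; apply: (ub_le_sup (rset_ub Hm)); by exists x, k.
Qed.

Lemma Cmu_ge0 N mu : is_measure_on N mu -> 0 <= C_mu N mu.
Proof.
move=> Hm; apply: sup_ge0 => t [x [k [Hx ->]]].
by apply: divr_ge0; apply/ltW/bm_pos.
Qed.

Definition mset (N : nat) := [set t : R | exists mu : nat -> R, is_measure_on N mu /\ t = C_mu N mu].

Lemma CL_le N mu : is_measure_on N mu -> C_L N <= C_mu N mu.
Proof.
move=> Hm.
have hl : has_lbound (mset N) by exists 0 => t [nu [Hnu ->]]; exact: Cmu_ge0.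
by apply: (ge_inf hl); exists mu.
Qed.

Lemma CL_le3 N : C_L N <= 3 :> R.
Proof.
have Hm : is_measure_on N (fun _ => 1 : R) by move=> v _; exact: ltr01.
apply: le_trans (CL_le Hm) _.
apply: sup_le_b => // t [x [k [Hx ->]]].
rewrite ler_pdivrMr; last exact: bm_pos.
rewrite !ball_massE; try lia.
rewrite !(@S_const _ (fun _ => 1 : R) _ _ 1) //.
rewrite -natrM ler_nat /lo /hi; lia.
Qed.

Lemma Cmu_mono n nu : is_measure_on n.+1 nu -> C_mu n.+1 nu <= 3 -> C_mu n nu <= C_mu n.+1 nu.
Proof.
move=> Hm H3.
apply: sup_le_b; last exact: Cmu_ge0.
move=> t [x [k [Hx ->]]].
have Hn : (0 < n)%N by lia.
have Hm' : is_measure_on n nu by move=> v Hv; apply: Hm; lia.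
rewrite ler_pdivrMr; last exact: bm_pos.
rewrite !ball_massE; try lia.
apply: key => //.
move=> y j Hy.
have := @ratio_le n.+1 nu y j Hm Hy.
rewrite ler_pdivrMr; last exact: bm_pos.
by rewrite !ball_massE; try lia.
Qed.

End Main.

Local Close Scope classical_set_scope.

Theorem proposition5p2 (R : realType) (n : nat) : @C_L R n <= @C_L R n.+1.
Proof.
rewrite [X in _ <= X]/C_L.
apply: lb_le_inf.
  exists (C_mu n.+1 (fun _ => 1 : R)), (fun _ => 1 : R); split => //.
move=> t [nu [Hnu ->]].
have Hm' : is_measure_on n nu by move=> v Hv; apply: Hnu; lia.
case: (lerP (C_mu n.+1 nu) 3) => h3.
  exact: le_trans (CL_le Hm') (Cmu_mono Hnu h3).
exact: le_trans (CL_le3 n) (ltW h3).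
Qed.
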